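(* Let $(X,d)$ be a separable metric space, $T\colon X\to X$ Borel measurable, and $\mu$ a $T$-invariant Borel probability measure with Hausdorff dimension $\alpha$. Then $C_\phi\le 1/\alpha$ (with $1/0=\infty$), where \[C_\phi=\sup\big(\{0\}\cup\{s>0:\ \liminf_{n\to\infty}n^s d(T^nx,y)=0 \text{ for }\mu\times\mu\text{-a.e. }(x,y)\}\big).\]
   Context: The Hausdorff dimension of $\mu$ (with respect to $d$) is understood as $\inf\{\dim_H E:\ E \text{ Borel},\ \mu(E)=1\}$, where $\dim_H$ is Hausdorff dimension of sets. *)

(* Defs.v *)
From HB Require Import structures.
From mathcomp Require Import all_boot all_order all_algebra.
From mathcomp Require Import all_classical all_reals all_analysis.
Unset Printing Implicit Defensive.
Import Order.TTheory GRing.Theory Num.Theory.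
Local Open Scope classical_set_scope.
Local Open Scope ring_scope.

Section metric_defs.
Context {R : realType} {X : Type}.
Variable d : X -> X -> R.

Definition is_metric : Prop :=
  [/\ forall x y, 0 <= d x y,
      forall x y, d x y = 0 <-> x = y,
      forall x y, d x y = d y x &
      forall x y z, d x z <= d x y + d y z].

Definition separable_metric : Prop :=
  exists D : set X, countable D /\
    forall x (e : R), 0 < e -> exists2 y, D y & d x y < e.

Definition metric_open (A : set X) : Prop :=
  forall x, A x -> exists2 r : R, 0 < r & [set y | d x y < r] `<=` A.

(* diameter of a set, as an extended real (sup of the empty set is -oo,
   but empty sets are given cost 0 below) *)
Definition diam (U : set X) : \bar R :=
  ereal_sup [set (d x y)%:E | x in U & y in U].

Definition hcost (s : R) (U : set X) : \bar R :=
  if U == set0 then 0%E else ((fine (diam U)) `^ s)%:E.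

Definition hausdorff_content (s delta : R) (E : set X) : \bar R :=
  ereal_inf [set (\sum_(0 <= i <oo) hcost s (U i))%E | U in
    [set U : nat -> set X |
       E `<=` \bigcup_i U i /\
       forall i x y, U i x -> U i y -> d x y <= delta]].

Definition hausdorff_measure (s : R) (E : set X) : \bar R :=
  ereal_sup [set hausdorff_content s delta E | delta in [set delta : R | 0 < delta]].

Definition hausdorff_dim (E : set X) : \bar R :=
  ereal_inf [set s%:E | s in [set s : R | 0 <= s /\ hausdorff_measure s E = 0%E]].

End metric_defs.

Definition hausdorff_dim_measure {R : realType} {X : pointedType}
  (d : X -> X -> R)
  (mu : set (g_sigma_algebraType (metric_open d)) -> \bar R) : \bar R :=
  ereal_inf [set hausdorff_dim d E | E in
     [set E : set X | (metric_open d).-sigma.-measurable E /\ mu E = 1%E]].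

Definition ereal_recip {R : realType} (a : \bar R) : \bar R :=
  match a with
  | r%:E => if r == 0 then +oo%E else (r^-1)%:E
  | _ => 0%E
  end.

Definition C_phi {R : realType} {X : pointedType} (d : X -> X -> R) (T : X -> X)
  (mu : {measure set (g_sigma_algebraType (metric_open d)) -> \bar R}) : \bar R :=
  ereal_sup ([set 0%E] `|` [set s%:E | s in [set s : R | 0 < s /\
     {ae (mu \x mu)%E, forall z : g_sigma_algebraType (metric_open d) *
                                  g_sigma_algebraType (metric_open d),
        limn_einf (fun n : nat => ((n%:R `^ s) * d (iter n T z.1) z.2)%:E) = 0%E}]]).

(* Main.v *)
Require Import Defs.
From HB Require Import structures.
From mathcomp Require Import all_boot all_order all_algebra.
From mathcomp Require Import all_classical all_reals all_analysis.
From mathcomp Require Import zify ring lra.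
Import Order.TTheory GRing.Theory Num.Theory.
Local Open Scope classical_set_scope.
Local Open Scope ring_scope.
Lemma powR_exprn_base (R : realType) (a p : R) (K : nat) : 0 <= a ->
  (a ^+ K) `^ p = (a `^ p) ^+ K.
Proof.
move=> a0; elim: K => [|K IH]; first by rewrite !expr0 powR1.
by rewrite !exprS powRM ?exprn_ge0// IH.
Qed.

Lemma pseries_bound (R : realType) (p : R) : 1 < p ->
  exists Z : R, forall M, \sum_(0 <= i < M) ((i.+1%:R) `^ p)^-1 <= Z.
Proof.
move=> p1.
have p0 : 0 <= p by rewrite (le_trans _ (ltW p1)).
set g := fun i : nat => ((i.+1%:R : R) `^ p)^-1.
have g0 i : 0 <= g i by rewrite /g invr_ge0 powR_ge0.
have gpos i : 0 < (i.+1%:R : R) `^ p by rewrite powR_gt0.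
have gdec i j : (i <= j)%N -> g j <= g i.
  move=> ij; rewrite /g lef_pV2 ?posrE//.
  by apply: ge0_ler_powR => //; rewrite ?nnegrE// ler_nat.
set q := (2 : R) `^ p.
have q2 : 2 < q.
  rewrite /q -[X in X < _]powRr1 //.
  rewrite /powR !gt_eqF // ltr_expR ltr_pM2r ?ln_gt0 ?ltr1n//.
have q0 : 0 < q by rewrite (lt_trans _ q2).
set r := 2 / q.
have r0 : 0 < r by rewrite divr_gt0.
have r1 : r < 1 by rewrite /r ltr_pdivrMr // mul1r.
have block K : \sum_(0 <= i < (2^K).-1) g i <= \sum_(0 <= k < K) r ^+ k.
  elim: K => [|K IH]; first by rewrite expn0 /= !big_geq.
  have e : (2 ^ K.+1).-1 = ((2^K).-1 + 2^K)%N.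
    by rewrite expnS; have := expn_gt0 2 K; lia.
  rewrite e (big_cat_nat _ (leq_addr _ _)) //= big_nat_recr //=.
  apply: lerD => //.
  apply: (@le_trans _ _ (\sum_((2^K).-1 <= i < ((2^K).-1 + 2^K)%N) g (2^K)%N.-1)).
    by apply: ler_sum_nat => i /andP[hi _]; apply: gdec.
  rewrite sumr_const_nat addKn /g prednK ?expn_gt0 //.
  rewrite natrX powR_exprn_base // -/q -mulr_natr natrX /r exprMn exprVn mulrC.
  by [].
exists ((1 - r)^-1) => M.
apply: (@le_trans _ _ (\sum_(0 <= i < (2^M).-1) g i)).
  have hM : (M <= (2^M).-1)%N by have := ltn_expl M (isT : (1 < 2)%N); lia.
  rewrite (big_cat_nat (leq0n M) hM) /= lerDl.
  by apply: sumr_ge0 => i _.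
apply: (le_trans (block M)).
have rn : `|r| < 1 by rewrite ger0_norm ?ltW.
have := @geometric_le_lim R M 1 r ler01 r0 rn.
rewrite mul1r seriesEnat /geometric.
move=> H; apply: le_trans H; apply: ler_sum => k _; by rewrite /= mul1r.
Qed.
Lemma hcost_le (R : realType) (X : Type) (d : X -> X -> R) (U : set X) (t b : R) :
  0 <= t -> 0 <= b -> (forall x, d x x = 0) ->
  (forall x y, U x -> U y -> d x y <= b) -> (hcost d t U <= (b `^ t)%:E)%E.
Proof.
move=> t0 b0 dxx hU; rewrite /hcost; case: ifPn => [_|/set0P [x Ux]].
  by rewrite lee_fin powR_ge0.
have h1 : (diam d U <= b%:E)%E.
  by apply: ge_ereal_sup => _ [x' Ux' [y Uy <-]]; rewrite lee_fin hU.
have h0 : (0 <= diam d U)%E.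
  by apply: ereal_sup_ubound; exists x => //; exists x => //; rewrite dxx.
move: h0 h1; case: (diam d U) => [r| |] //= r0 rb.
rewrite lee_fin; apply: ge0_ler_powR => //; rewrite ?nnegrE//.
Qed.
Lemma content_le (R : realType) (X : Type) (d : X -> X -> R) (E : set X)
  (a : nat -> X) (s t c delta Z : R) :
  is_metric d -> 0 < s -> 0 < t -> 0 < c -> 2 * c <= delta ->
  (forall M, \sum_(0 <= i < M) ((i.+1%:R) `^ (s*t))^-1 <= Z) ->
  (forall y, E y -> exists n, (n.+1%:R `^ s) * d (a n.+1) y < c) ->
  (hausdorff_content d t delta E <= ((2*c) `^ t * Z)%:E)%E.
Proof.
case=> dge0 deq dsym dtri s0 t0 c0 cdelta HZ HE.
have dxx x : d x x = 0 by apply/deq.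
set w := fun i : nat => (i.+1%:R : R) `^ s.
have w1 i : 1 <= w i.
  have := @ge0_ler_powR R s (ltW s0) 1 i.+1%:R; rewrite powR1 /w.
  by apply; rewrite ?nnegrE ?ler1n.
have w0 i : 0 < w i by apply: lt_le_trans (w1 i).
set U := fun i : nat => [set y | w i * d (a i.+1) y < c].
have Ubd i y : U i y -> d (a i.+1) y <= c / w i.
  by rewrite /U /= => h; rewrite ltW // ltr_pdivlMr // mulrC.
have Udiam i y z : U i y -> U i z -> d y z <= 2 * c / w i.
  move=> Uy Uz; rewrite (le_trans (dtri _ (a i.+1) _)) // dsym.
  have := Ubd _ _ Uy; have := Ubd _ _ Uz; rewrite -mulrA; lra.
have cost i : (hcost d t (U i) <= (((2*c) `^ t) * ((i.+1%:R)`^(s*t))^-1)%:E)%E.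
  apply: le_trans (@hcost_le _ _ d (U i) t (2 * c / w i) (ltW t0) _ dxx (Udiam i)) _.
    by rewrite divr_ge0 ?mulr_ge0 ?ltW.
  have c20 : 0 <= 2 * c by rewrite mulr_ge0 // ltW.
  rewrite lee_fin powRM // ?invr_ge0 ?(ltW (w0 i)) //.
  have wt0 : w i `^ t != 0 by rewrite gt_eqF // powR_gt0.
  have H : w i `^ t * (w i)^-1 `^ t = 1.
    by rewrite -powRM ?invr_ge0 ?ltW // mulfV ?gt_eqF // powR1.
  have -> : (w i)^-1 `^ t = (w i `^ t)^-1.
    by apply: (mulfI wt0); rewrite H mulfV.
  by rewrite /w powRrM.
apply: le_trans.
  apply: ereal_inf_lbound; exists U => //; split.
    by move=> y /HE [n hn]; exists n.
  move=> i x y Ux Uy; apply: (le_trans (Udiam i x y Ux Uy)).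
  rewrite ler_pdivrMr // (le_trans cdelta) // ler_peMr // ?(le_trans _ cdelta) ?mulr_ge0 ?ltW //.
apply: lime_le.
  by apply: is_cvg_nneseries => n _ _; rewrite /hcost; case: ifPn => _; rewrite ?lee_fin ?powR_ge0.
apply: nearW => M.
apply: le_trans; first by apply: lee_sum => i _; exact: cost.
rewrite sumEFin lee_fin -mulr_sumr.
by apply: ler_wpM2l; rewrite ?powR_ge0 // HZ.
Qed.
Lemma hmeasure0 (R : realType) (X : Type) (d : X -> X -> R) (E : set X)
  (a : nat -> X) (s t : R) :
  is_metric d -> 0 < s -> 1 < s * t ->
  (forall y, E y -> forall c : R, 0 < c ->
     exists n, (n.+1%:R `^ s) * d (a n.+1) y < c) ->
  hausdorff_measure d t E = 0%E.
Proof.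
move=> dm s0 st1 HE.
have t0 : 0 < t by rewrite -(pmulr_rgt0 _ s0) (lt_trans ltr01 st1).
have [Z HZ] := @pseries_bound R (s * t) st1.
have Z0 : 0 <= Z by have := HZ 0%N; rewrite big_geq.
set Z' := Z + 1.
have Z'0 : 0 < Z' by rewrite /Z'; lra.
have cont0 delta : 0 < delta -> hausdorff_content d t delta E = 0%E.
  move=> dp; apply/le_anti/andP; split; last first.
    apply: le_ereal_inf_tmp => _ [U _ <-]; apply: nneseries_ge0 => n _ _.
    by rewrite /hcost; case: ifPn => _; rewrite ?lee_fin ?powR_ge0.
  apply/lee_addgt0Pr => e e0; rewrite add0e.
  set b := (e / Z') `^ t^-1.
  have b0 : 0 < b by rewrite powR_gt0 // divr_gt0.
  set c := Num.min (delta / 2) (b / 2).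
  have c0 : 0 < c by rewrite lt_min !divr_gt0.
  have h2d : 2 * c <= delta.
    have : c <= delta / 2 by rewrite ge_min lexx.
    lra.
  have HE' : forall y : X, E y -> exists n : nat, n.+1%:R `^ s * d (a n.+1) y < c.
    by move=> y Ey; apply: HE.
  apply: (le_trans (@content_le R X d E a s t c delta Z dm s0 t0 c0 h2d HZ HE')).
  rewrite lee_fin.
  have h2c : 2 * c <= b.
    have : c <= b / 2 by rewrite ge_min lexx orbT.
    lra.
  have : (2 * c) `^ t <= e / Z'.
    have -> : e / Z' = b `^ t.
      by rewrite /b -powRrM mulVf ?gt_eqF // powRr1 // divr_ge0 // ltW.
    by apply: ge0_ler_powR; rewrite ?nnegrE ?(ltW t0) ?(ltW b0) ?mulr_ge0 ?(ltW c0).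
  move=> h; apply: (le_trans (ler_wpM2r Z0 h)).
  rewrite mulrAC ler_pdivrMr // ler_wpM2l ?(ltW e0) //; rewrite /Z'; lra.
apply/le_anti/andP; split.
  by apply: ge_ereal_sup => _ [delta dp <-]; rewrite (cont0 delta dp).
by apply: ereal_sup_ubound; exists 1; [exact: ltr01 | exact: (cont0 1 ltr01)].
Qed.
Local Open Scope ereal_scope.
Lemma liminf0_small (R : realType) (u : (\bar R)^nat) : limn_einf u = 0 ->
  forall c : R, (0 < c)%R -> forall N, exists2 n, (N <= n)%N & u n < c%:E.
Proof.
rewrite limn_einf_lim => H c c0 N.
have : einfs u N <= limn (einfs u).
  apply: lime_ge; first exact: is_cvg_einfs.
  by near=> m; apply: nondecreasing_einfs; near: m; exists N.
rewrite H => HN.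
have : einfs u N < c%:E by apply: (le_lt_trans HN); rewrite lte_fin.
move=> /ereal_inf_lt [_ [n /= Nn <-] hn].
by exists n.
Unshelve. all: by end_near. Qed.
Local Close Scope ereal_scope.

Theorem proposition6p10 (R : realType) (X : pointedType) (d : X -> X -> R)
  (T : g_sigma_algebraType (metric_open d) -> g_sigma_algebraType (metric_open d))
  (mu : probability (g_sigma_algebraType (metric_open d)) R) :
  is_metric d -> separable_metric d ->
  measurable_fun setT T ->
  (forall A, (metric_open d).-sigma.-measurable A -> mu (T @^-1` A) = mu A) ->
  (C_phi d T mu <= ereal_recip (hausdorff_dim_measure d mu))%E.
Proof.
move=> dm _ _ _.
set D := hausdorff_dim_measure d mu.
have D0 : (0 <= D)%E.
  apply: le_ereal_inf_tmp => _ [E _ <-].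
  by apply: le_ereal_inf_tmp => _ [t [t0 _] <-]; rewrite lee_fin.
have key : forall s : R, 0 < s ->
    {ae (mu \x mu)%E, forall z : g_sigma_algebraType (metric_open d) *
                                  g_sigma_algebraType (metric_open d),
        limn_einf (fun n : nat => ((n%:R `^ s) * d (iter n T z.1) z.2)%:E) = 0%E} ->
    (D <= (s^-1)%:E)%E.
  move=> s s0 Hae.
  case: Hae => A [mA muA0 subA].
  have mf := measurable_fun_xsection mu mA.
  set f := (mu \o xsection A) in mf.
  have := (ae_eq_integral_abs mu measurableT mf).1.
  have -> : (\int[mu]_(x in setT) `|f x| = 0)%E.
    rewrite -[RHS]muA0 /product_measure1; apply: eq_integral => x _.
    by rewrite gee0_abs // measure_ge0.
  move=> /(_ erefl) [N [mN muN0 subN]].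
  have [x0 Nx0] : exists x0, ~ N x0.
    apply: contrapT => H.
    have : (mu setT <= mu N)%E by apply: le_measure; rewrite ?inE // => x _; apply: contrapT => Hx; apply: H; exists x.
    by rewrite muN0 probability_setT lee_fin ler10.
  have fx0 : f x0 = 0%E.
    by apply: contrapT => h; apply: Nx0; apply: subN => /= /(_ I).
  set E := ~` xsection A x0.
  have mE : measurable E by apply: measurableC; exact: measurable_xsection.
  have muE : mu E = 1%E.
    rewrite probability_setC //; last exact: measurable_xsection.
    by move: fx0; rewrite /f /= => ->; rewrite sube0.
  have HE : forall y, E y -> forall c : R, 0 < c ->
      exists n, (n.+1%:R `^ s) * d (iter n.+1 T x0) y < c.
    move=> y Ey c c0.
    have P : limn_einf (fun n : nat => ((n%:R `^ s) * d (iter n T x0) y)%:E) = 0%E.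
      apply: contrapT => h; apply: Ey; rewrite /xsection /= inE.
      by apply: (subA (x0, y)).
    have [n n1 hn] := @liminf0_small R _ P c c0 1%N.
    by case: n n1 hn => // n _ hn; exists n; rewrite -lte_fin.
  have HdimE : (hausdorff_dim d E <= (s^-1)%:E)%E.
    apply/lee_addgt0Pr => e e0.
    apply: ereal_inf_lbound; exists (s^-1 + e) => //; split.
      by rewrite addr_ge0 ?invr_ge0 ?ltW.
    apply: (@hmeasure0 R X d E (fun n => iter n T x0) s) => //.
    by rewrite mulrDr mulfV ?gt_eqF // ltrDl mulr_gt0.
  apply: le_trans HdimE; apply: ereal_inf_lbound; exists E => //.
apply: ge_ereal_sup => _ [-> | [s [s0 Hae] <-]].
  by clear key; move: D0; case: D => [r| |] //= r0; case: ifPn => // _; rewrite lee_fin invr_ge0 -lee_fin.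
have := key s s0 Hae; clear key; move: D0; case: D => [r| |] //= r0 rs.
case: ifPn => [_|rn0]; first by rewrite leey.
rewrite lee_fin in r0 rs *.
have rp : 0 < r by rewrite lt_neqAle eq_sym rn0 r0.
rewrite !lee_fin in rs *.
by rewrite -(invrK s) lef_pV2 ?posrE ?invr_gt0.
Qed.
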